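(* Let $\psi,\varphi$ be metric formulas and $m,n\in\mathbb{N}$ with $0<m<n-1$. Then, with respect to strict timed traces, $$\psi\,\mathsf{U}_{[m,n)}\,\varphi\equiv\psi\wedge\Big(\bigvee_{i=1}^{m}\circ_{[i,i]}\big(\psi\,\mathsf{U}_{[m-i,n-i)}\,\varphi\big)\vee\bigvee_{i=m+1}^{n-1}\circ_{[i,i]}\big(\psi\,\mathsf{U}_{[0,n-1-i]}\,\varphi\big)\Big),$$ $$\psi\,\mathsf{R}_{[m,n)}\,\varphi\equiv\psi\vee\Big(\bigwedge_{i=1}^{m}\widehat{\circ}_{[i,i]}\big(\psi\,\mathsf{R}_{[m-i,n-i)}\,\varphi\big)\wedge\bigwedge_{i=m+1}^{n-1}\widehat{\circ}_{[i,i]}\big(\psi\,\mathsf{R}_{[0,n-1-i]}\,\varphi\big)\Big),$$ and the same holds for the dual past operators, i.e. the equivalences obtained by replacing $\mathsf{U},\mathsf{R},\circ,\widehat{\circ}$ by $\mathsf{S},\mathsf{T},\bullet,\widehat{\bullet}$ respectively.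
   Context: Write $[m,n)=\{i\in\mathbb{N}\mid m\le i<n\}$, $[m,n]=\{i\in\mathbb{N}\mid m\le i\le n\}$, $(m,n]=\{i\in\mathbb{N}\mid m<i\le n\}$. Metric formulas over a set of atoms $\mathcal{A}$: $\varphi::=p\mid\bot\mid\varphi_1\wedge\varphi_2\mid\varphi_1\vee\varphi_2\mid\varphi_1\to\varphi_2\mid\bullet_I\varphi\mid\varphi_1\mathsf{S}_I\varphi_2\mid\varphi_1\mathsf{T}_I\varphi_2\mid\circ_I\varphi\mid\varphi_1\mathsf{U}_I\varphi_2\mid\varphi_1\mathsf{R}_I\varphi_2$, $p\in\mathcal{A}$, $I=[m,n)$, $m\in\mathbb{N}$, $n\in\mathbb{N}\cup\{\omega\}$; a subscript $[m,n]$ with $n\in\mathbb{N}$ abbreviates $[m,n+1)$. Derived: $\neg\varphi:=\varphi\to\bot$, $\top:=\neg\bot$, $\widehat{\bullet}_I\varphi:=\bullet_I\varphi\vee\neg\bullet_I\top$, $\widehat{\circ}_I\varphi:=\circ_I\varphi\vee\neg\circ_I\top$. A timed HT-trace of length $\lambda\in\mathbb{N}\cup\{\omega\}$ is $\mathbf{M}=(\langle\mathbf{H},\mathbf{T}\rangle,\tau)$ with $H_i\subseteq T_i\subseteq\mathcal{A}$ for $i\in[0,\lambda)$, $\tau:[0,\lambda)\to\mathbb{N}$, $\tau(0)=0$, $\tau(i)\le\tau(i+1)$; it is strict if $\tau(i)<\tau(i+1)$ whenever $i+1<\lambda$. Satisfaction at $k\in[0,\lambda)$: $\bot$ never; $p$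 iff $p\in H_k$; $\wedge,\vee$ usual; $\varphi\to\psi$ iff for both $\mathbf{M}'=\mathbf{M}$ and $\mathbf{M}'=(\langle\mathbf{T},\mathbf{T}\rangle,\tau)$, $\mathbf{M}',k\not\models\varphi$ or $\mathbf{M}',k\models\psi$; $\bullet_I\varphi$ iff $k>0$, $\mathbf{M},k-1\models\varphi$, $\tau(k)-\tau(k-1)\in I$; $\varphi\mathsf{S}_I\psi$ iff for some $j\in[0,k]$ with $\tau(k)-\tau(j)\in I$, $\mathbf{M},j\models\psi$ and $\mathbf{M},i\models\varphi$ for all $i\in(j,k]$; $\varphi\mathsf{T}_I\psi$ iff for all $j\in[0,k]$ with $\tau(k)-\tau(j)\in I$, $\mathbf{M},j\models\psi$ or $\mathbf{M},i\models\varphi$ for some $i\in(j,k]$; $\circ_I\varphi$ iff $k+1<\lambda$, $\mathbf{M},k+1\models\varphi$, $\tau(k+1)-\tau(k)\in I$; $\varphi\mathsf{U}_I\psi$ iff for some $j\in[k,\lambda)$ with $\tau(j)-\tau(k)\in I$, $\mathbf{M},j\models\psi$ and $\mathbf{M},i\models\varphi$ for all $i\in[k,j)$; $\varphi\mathsf{R}_I\psi$ iff for all $j\in[k,\lambda)$ with $\tau(j)-\tau(k)\in I$, $\mathbf{M},j\models\psi$ or $\mathbf{M},i\models\varphi$ for some $i\in[k,j)$. Here $\alpha\equiv\beta$ (w.r.t. strict traces) means: for every strict timed HT-trace $\mathbf{M}$ of any length $\lambda$ and every $k\in[0,\lambda)$, $\mathbf{M},k\models\alpha$ iff $\mathbf{M},k\models\beta$.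 *)

(* Defs.v *)
From Stdlib Require Import Arith List.
Import ListNotations.

Set Implicit Arguments.

(* Intervals [lo, hi) with lo : nat and hi : nat or omega (None = omega). *)
Record interval := mkI { lo : nat; hi : option nat }.

Definition closedI (a b : nat) : interval := mkI a (Some (S b)).

Definition in_int (d : nat) (I : interval) : Prop :=
  lo I <= d /\ match hi I with None => True | Some h => d < h end.

Inductive formula (A : Type) : Type :=
| Atom : A -> formula A
| Bot : formula A
| And : formula A -> formula A -> formula A
| Or : formula A -> formula A -> formula A
| Imp : formula A -> formula A -> formula A
| Prev : interval -> formula A -> formula A
| Since : interval -> formula A -> formula A -> formula A
| Trigger : interval -> formula A -> formula A -> formula A
| Next : interval -> formula A -> formula A
| Until : interval -> formula A -> formula A -> formula A
| Release : interval -> formula A -> formula A -> formula A.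

Arguments Bot {A}.

Definition Neg {A} (f : formula A) : formula A := Imp f Bot.
Definition Top {A} : formula A := Neg Bot.
Definition WPrev {A} (I : interval) (f : formula A) : formula A :=
  Or (Prev I f) (Neg (Prev I Top)).
Definition WNext {A} (I : interval) (f : formula A) : formula A :=
  Or (Next I f) (Neg (Next I Top)).

Fixpoint bigOr {A} (l : list (formula A)) : formula A :=
  match l with
  | [] => Bot
  | [f] => f
  | f :: l' => Or f (bigOr l')
  end.
Fixpoint bigAnd {A} (l : list (formula A)) : formula A :=
  match l with
  | [] => Top
  | [f] => f
  | f :: l' => And f (bigAnd l')
  end.

(* i ranges over a..b (inclusive) *)
Definition range (a b : nat) : list nat := List.seq a (S b - a).

(* Timed HT-trace: length lam (None = omega), H, T, tau. *)
Record trace (A : Type) := mkTrace {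
  lam : option nat;
  Hs : nat -> A -> Prop;
  Ts : nat -> A -> Prop;
  tau : nat -> nat }.

Definition lt_len {A} (M : trace A) (k : nat) : Prop :=
  match lam M with None => True | Some l => k < l end.

Definition wf_trace {A} (M : trace A) : Prop :=
  (forall i, lt_len M i -> forall p, Hs M i p -> Ts M i p) /\
  tau M 0 = 0 /\
  (forall i, lt_len M (S i) -> tau M i <= tau M (S i)).

Definition strict_trace {A} (M : trace A) : Prop :=
  forall i, lt_len M (S i) -> tau M i < tau M (S i).

Definition totT {A} (M : trace A) : trace A :=
  mkTrace (lam M) (Ts M) (Ts M) (tau M).

Fixpoint sat {A} (M : trace A) (k : nat) (f : formula A) : Prop :=
  match f with
  | Atom p => Hs M k p
  | Bot => False
  | And f1 f2 => sat M k f1 /\ sat M k f2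
  | Or f1 f2 => sat M k f1 \/ sat M k f2
  | Imp f1 f2 => (~ sat M k f1 \/ sat M k f2) /\
                 (~ sat (totT M) k f1 \/ sat (totT M) k f2)
  | Prev J g => 0 < k /\ sat M (k - 1) g /\ in_int (tau M k - tau M (k - 1)) J
  | Since J g h => exists j, j <= k /\ in_int (tau M k - tau M j) J /\
      sat M j h /\ (forall i, j < i <= k -> sat M i g)
  | Trigger J g h => forall j, j <= k -> in_int (tau M k - tau M j) J ->
      sat M j h \/ (exists i, j < i <= k /\ sat M i g)
  | Next J g => lt_len M (S k) /\ sat M (S k) g /\
      in_int (tau M (S k) - tau M k) J
  | Until J g h => exists j, k <= j /\ lt_len M j /\
      in_int (tau M j - tau M k) J /\
      sat M j h /\ (forall i, k <= i < j -> sat M i g)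
  | Release J g h => forall j, k <= j -> lt_len M j ->
      in_int (tau M j - tau M k) J ->
      sat M j h \/ (exists i, k <= i < j /\ sat M i g)
  end.

Definition equiv_strict {A} (a b : formula A) : Prop :=
  forall M : trace A, wf_trace M -> strict_trace M ->
  forall k, lt_len M k -> (sat M k a <-> sat M k b).

(* Main.v *)
Require Import Defs.
From Stdlib Require Import Arith List Lia Classical.
Import ListNotations.
Require Import Defs.

Lemma lt_len_down {A} (M : trace A) i j : lt_len M j -> i <= j -> lt_len M i.
Proof. unfold lt_len; destruct (lam M); lia. Qed.

Lemma tau_lt {A} (M : trace A) : strict_trace M ->
  forall j, lt_len M j -> forall i, i < j -> tau M i < tau M j.
Proof.
  intros st j; induction j; intros Hj i Hi; [lia|].
  assert (tau M j < tau M (S j)) by (apply st; auto).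
  destruct (Nat.eq_dec i j); [subst; auto|].
  assert (tau M i < tau M j) by (apply IHj; [eapply lt_len_down; eauto|lia]). lia.
Qed.

Lemma tau_le {A} (M : trace A) : strict_trace M ->
  forall j, lt_len M j -> forall i, i <= j -> tau M i <= tau M j.
Proof.
  intros st j Hj i Hi. destruct (Nat.eq_dec i j); [subst; lia|].
  assert (tau M i < tau M j) by (apply tau_lt; auto; lia). lia.
Qed.

Lemma sat_bigOr {A} (M : trace A) k l :
  sat M k (bigOr l) <-> exists f, In f l /\ sat M k f.
Proof.
  induction l as [|f l IH]; simpl.
  - split; [tauto| intros [f [[] _]]].
  - destruct l as [|g l'].
    + split; [intros H; exists f; auto | intros [f' [[<-|[]] H]]; auto].
    + change (sat M k (bigOr (g :: l'))) with (sat M k (bigOr (g::l'))) in IH.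
      simpl sat at 1. fold (bigOr (g :: l')). rewrite IH.
      split.
      * intros [H|[f' [Hi H]]]; [exists f; auto| exists f'; auto].
      * intros [f' [[<-|Hi] H]]; [left; auto| right; exists f'; auto].
Qed.

Lemma sat_Top {A} (M : trace A) k : sat M k Top.
Proof. simpl. tauto. Qed.

Lemma sat_bigAnd {A} (M : trace A) k l :
  sat M k (bigAnd l) <-> forall f, In f l -> sat M k f.
Proof.
  induction l as [|f l IH].
  - simpl bigAnd. split; [intros _ f []| intros _; apply sat_Top].
  - destruct l as [|g l'].
    + simpl bigAnd. split; [intros H f' [<-|[]]; auto | intros H; apply H; left; auto].
    + simpl bigAnd at 1. simpl sat at 1. fold (bigAnd (g :: l')). rewrite IH.
      split.
      * intros [H1 H2] f' [<-|Hi]; auto.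
      * intros H; split; [apply H; left; auto| intros; apply H; right; auto].
Qed.

Lemma in_map_range {C} (g : nat -> C) (a b : nat) f :
  In f (map (fun i => g i) (range a b)) <-> exists i, a <= i <= b /\ f = g i.
Proof.
  unfold range. rewrite in_map_iff. split.
  - intros [x [<- Hx]]. apply in_seq in Hx. exists x. split; [lia|auto].
  - intros [x [Hx ->]]. exists x. split; auto. apply in_seq. lia.
Qed.

Lemma sat_bigOr_r {A} (M : trace A) k (g : nat -> formula A) a b :
  sat M k (bigOr (map g (range a b))) <-> exists i, a <= i <= b /\ sat M k (g i).
Proof.
  rewrite sat_bigOr. split.
  - intros [f [Hf H]]. apply (in_map_range g) in Hf. destruct Hf as [i [Hi ->]]. eauto.
  - intros [i [Hi H]]. exists (g i). split; auto. apply (in_map_range g). eauto.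
Qed.

Lemma sat_bigAnd_r {A} (M : trace A) k (g : nat -> formula A) a b :
  sat M k (bigAnd (map g (range a b))) <-> forall i, a <= i <= b -> sat M k (g i).
Proof.
  rewrite sat_bigAnd. split.
  - intros H i Hi. apply H. apply (in_map_range g). eauto.
  - intros H f Hf. apply (in_map_range g) in Hf. destruct Hf as [i [Hi ->]]. auto.
Qed.

Lemma sat_WNext {A} (M : trace A) k J f :
  sat M k (WNext J f) <-> sat M k (Next J f) \/
     ~ (lt_len M (S k) /\ in_int (tau M (S k) - tau M k) J).
Proof.
  unfold WNext, Neg. simpl. pose proof (sat_Top M (S k)). pose proof (sat_Top (totT M) (S k)).
  unfold Top, Neg in *. simpl in *. tauto.
Qed.

Lemma sat_WPrev {A} (M : trace A) k J f :
  sat M k (WPrev J f) <-> sat M k (Prev J f) \/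
     ~ (0 < k /\ in_int (tau M k - tau M (k - 1)) J).
Proof.
  unfold WPrev, Neg. simpl. pose proof (sat_Top M (k-1)). pose proof (sat_Top (totT M) (k-1)).
  unfold Top, Neg in *. simpl in *. tauto.
Qed.
Lemma until_case {A} (psi phi : formula A) (m n : nat) :
  0 < m -> m < n - 1 ->
  equiv_strict (Until (mkI m (Some n)) psi phi)
    (And psi (Or
       (bigOr (map (fun i => Next (closedI i i)
                 (Until (mkI (m - i) (Some (n - i))) psi phi)) (range 1 m)))
       (bigOr (map (fun i => Next (closedI i i)
                 (Until (closedI 0 (n - 1 - i)) psi phi)) (range (m + 1) (n - 1)))))).
Proof.
  intros Hm Hn M wf st k Hk.
  change (sat M k (And _ _)) with (sat M k psi /\ (sat M k (bigOr (map (fun i => Next (closedI i i)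
                 (Until (mkI (m - i) (Some (n - i))) psi phi)) (range 1 m))) \/
      sat M k (bigOr (map (fun i => Next (closedI i i)
                 (Until (closedI 0 (n - 1 - i)) psi phi)) (range (m + 1) (n - 1)))))).
  rewrite !sat_bigOr_r. simpl. unfold in_int, closedI; simpl.
  split.
  - intros [j [Hkj [Hj [[H1 H2] [HQ HP]]]]].
    assert (k <> j) by (intro; subst; lia).
    assert (HS : lt_len M (S k)) by (eapply lt_len_down; eauto; lia).
    assert (tau M k < tau M (S k)) by (apply st; auto).
    assert (tau M (S k) <= tau M j) by (apply tau_le; auto; lia).
    split; [apply HP; lia|].
    destruct (le_lt_dec (tau M (S k) - tau M k) m).
    + left. exists (tau M (S k) - tau M k). split; [lia|].
      split; auto. split; [|lia].
      exists j. repeat split; auto; try lia. intros i Hi; apply HP; lia.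
    + right. exists (tau M (S k) - tau M k). split; [lia|].
      split; auto. split; [|lia].
      exists j. repeat split; auto; try lia. intros i Hi; apply HP; lia.
  - intros [HPk [[d [Hd [HS [[j [Hkj [Hj [[H1 H2] [HQ HP]]]]] Hd2]]]]|[d [Hd [HS [[j [Hkj [Hj [[H1 H2] [HQ HP]]]]] Hd2]]]]]].
    + assert (tau M (S k) <= tau M j) by (apply tau_le; auto; lia).
      exists j. repeat split; auto; try lia.
      intros i Hi. destruct (Nat.eq_dec i k); [subst; auto| apply HP; lia].
    + assert (tau M (S k) <= tau M j) by (apply tau_le; auto; lia).
      exists j. repeat split; auto; try lia.
      intros i Hi. destruct (Nat.eq_dec i k); [subst; auto| apply HP; lia].
Qed.
Lemma release_case {A} (psi phi : formula A) (m n : nat) :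
  0 < m -> m < n - 1 ->
  equiv_strict (Release (mkI m (Some n)) psi phi)
    (Or psi (And
       (bigAnd (map (fun i => WNext (closedI i i)
                 (Release (mkI (m - i) (Some (n - i))) psi phi)) (range 1 m)))
       (bigAnd (map (fun i => WNext (closedI i i)
                 (Release (closedI 0 (n - 1 - i)) psi phi)) (range (m + 1) (n - 1)))))).
Proof.
  intros Hm Hn M wf st k Hk.
  change (sat M k (Or _ _)) with (sat M k psi \/ (sat M k (bigAnd (map (fun i => WNext (closedI i i)
                 (Release (mkI (m - i) (Some (n - i))) psi phi)) (range 1 m))) /\
      sat M k (bigAnd (map (fun i => WNext (closedI i i)
                 (Release (closedI 0 (n - 1 - i)) psi phi)) (range (m + 1) (n - 1)))))).
  rewrite !sat_bigAnd_r.
  setoid_rewrite sat_WNext. simpl. unfold in_int, closedI; simpl.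
  split.
  - intros H. destruct (classic (sat M k psi)) as [HP|HnP]; [left; auto|right].
    split; intros i Hi;
    (destruct (classic (lt_len M (S k) /\ tau M (S k) - tau M k = i)) as [[HS Hd]|Hno];
     [left; split; auto; split; [|lia] | right; intros [HS Hd]; apply Hno; split; auto; lia]);
    (assert (tau M k < tau M (S k)) by (apply st; auto));
    intros j Hj HLj [Hj1 Hj2];
    (assert (tau M (S k) <= tau M j) by (apply tau_le; auto; lia));
    (destruct (H j ltac:(lia) HLj ltac:(lia)) as [HQ|[i' [Hi' HPi']]]; [left; auto|right]);
    (exists i'; split; auto; destruct (Nat.eq_dec i' k); [subst; contradiction|lia]).
  - intros H j Hkj HLj [Hj1 Hj2].
    assert (k <> j) by (intro; subst; lia).
    destruct H as [HP|[H1 H2]]; [right; exists k; split; auto; lia|].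
    assert (HS : lt_len M (S k)) by (eapply lt_len_down; eauto; lia).
    assert (tau M k < tau M (S k)) by (apply st; auto).
    assert (tau M (S k) <= tau M j) by (apply tau_le; auto; lia).
    destruct (le_lt_dec (tau M (S k) - tau M k) m).
    + destruct (H1 (tau M (S k) - tau M k) ltac:(lia)) as [[_ [HR _]]|Hno];
        [|exfalso; apply Hno; split; auto; lia].
      destruct (HR j ltac:(lia) HLj ltac:(lia)) as [HQ|[i' [Hi' HPi']]]; [left; auto|right].
      exists i'; split; auto; lia.
    + destruct (H2 (tau M (S k) - tau M k) ltac:(lia)) as [[_ [HR _]]|Hno];
        [|exfalso; apply Hno; split; auto; lia].
      destruct (HR j ltac:(lia) HLj ltac:(lia)) as [HQ|[i' [Hi' HPi']]]; [left; auto|right].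
      exists i'; split; auto; lia.
Qed.
Lemma since_case {A} (psi phi : formula A) (m n : nat) :
  0 < m -> m < n - 1 ->
  equiv_strict (Since (mkI m (Some n)) psi phi)
    (And psi (Or
       (bigOr (map (fun i => Prev (closedI i i)
                 (Since (mkI (m - i) (Some (n - i))) psi phi)) (range 1 m)))
       (bigOr (map (fun i => Prev (closedI i i)
                 (Since (closedI 0 (n - 1 - i)) psi phi)) (range (m + 1) (n - 1)))))).
Proof.
  intros Hm Hn M wf st k Hk.
  change (sat M k (And _ _)) with (sat M k psi /\ (sat M k (bigOr (map (fun i => Prev (closedI i i)
                 (Since (mkI (m - i) (Some (n - i))) psi phi)) (range 1 m))) \/
      sat M k (bigOr (map (fun i => Prev (closedI i i)
                 (Since (closedI 0 (n - 1 - i)) psi phi)) (range (m + 1) (n - 1)))))).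
  rewrite !sat_bigOr_r. simpl. unfold in_int, closedI; simpl.
  split.
  - intros [j [Hkj [[H1 H2] [HQ HP]]]].
    assert (k <> j) by (intro; subst; lia).
    assert (tau M (k-1) < tau M k) by (apply tau_lt; auto; lia).
    assert (tau M j <= tau M (k-1)) by (apply tau_le; auto; solve [lia | eapply lt_len_down; eauto; lia]).
    split; [apply HP; lia|].
    destruct (le_lt_dec (tau M k - tau M (k-1)) m).
    + left. exists (tau M k - tau M (k-1)). split; [lia|].
      split; [lia|]. split; [|lia].
      exists j. repeat split; auto; try lia. intros i Hi; apply HP; lia.
    + right. exists (tau M k - tau M (k-1)). split; [lia|].
      split; [lia|]. split; [|lia].
      exists j. repeat split; auto; try lia. intros i Hi; apply HP; lia.
  - intros [HPk [[d [Hd [HS [[j [Hkj [[H1 H2] [HQ HP]]]] Hd2]]]]|[d [Hd [HS [[j [Hkj [[H1 H2] [HQ HP]]]] Hd2]]]]]].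
    + assert (tau M j <= tau M (k-1)) by (apply tau_le; auto; solve [lia | eapply lt_len_down; eauto; lia]).
      exists j. repeat split; auto; try lia.
      intros i Hi. destruct (Nat.eq_dec i k); [subst; auto| apply HP; lia].
    + assert (tau M j <= tau M (k-1)) by (apply tau_le; auto; solve [lia | eapply lt_len_down; eauto; lia]).
      exists j. repeat split; auto; try lia.
      intros i Hi. destruct (Nat.eq_dec i k); [subst; auto| apply HP; lia].
Qed.

Lemma trigger_case {A} (psi phi : formula A) (m n : nat) :
  0 < m -> m < n - 1 ->
  equiv_strict (Trigger (mkI m (Some n)) psi phi)
    (Or psi (And
       (bigAnd (map (fun i => WPrev (closedI i i)
                 (Trigger (mkI (m - i) (Some (n - i))) psi phi)) (range 1 m)))
       (bigAnd (map (fun i => WPrev (closedI i i)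
                 (Trigger (closedI 0 (n - 1 - i)) psi phi)) (range (m + 1) (n - 1)))))).
Proof.
  intros Hm Hn M wf st k Hk.
  change (sat M k (Or _ _)) with (sat M k psi \/ (sat M k (bigAnd (map (fun i => WPrev (closedI i i)
                 (Trigger (mkI (m - i) (Some (n - i))) psi phi)) (range 1 m))) /\
      sat M k (bigAnd (map (fun i => WPrev (closedI i i)
                 (Trigger (closedI 0 (n - 1 - i)) psi phi)) (range (m + 1) (n - 1)))))).
  rewrite !sat_bigAnd_r.
  setoid_rewrite sat_WPrev. simpl. unfold in_int, closedI; simpl.
  split.
  - intros H. destruct (classic (sat M k psi)) as [HP|HnP]; [left; auto|right].
    split; intros i Hi;
    (destruct (classic (0 < k /\ tau M k - tau M (k-1) = i)) as [[HS Hd]|Hno];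
     [left; split; auto; split; [|lia] | right; intros [HS Hd]; apply Hno; split; auto; lia]);
    (assert (tau M (k-1) < tau M k) by (apply tau_lt; auto; lia));
    intros j Hj [Hj1 Hj2];
    (assert (tau M j <= tau M (k-1)) by (apply tau_le; auto; solve [lia | eapply lt_len_down; eauto; lia]));
    (destruct (H j ltac:(lia) ltac:(lia)) as [HQ|[i' [Hi' HPi']]]; [left; auto|right]);
    (exists i'; split; auto; destruct (Nat.eq_dec i' k); [subst; contradiction|lia]).
  - intros H j Hkj [Hj1 Hj2].
    assert (k <> j) by (intro; subst; lia).
    destruct H as [HP|[H1 H2]]; [right; exists k; split; auto; lia|].
    assert (tau M (k-1) < tau M k) by (apply tau_lt; auto; lia).
    assert (tau M j <= tau M (k-1)) by (apply tau_le; auto; solve [lia | eapply lt_len_down; eauto; lia]).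
    destruct (le_lt_dec (tau M k - tau M (k-1)) m).
    + destruct (H1 (tau M k - tau M (k-1)) ltac:(lia)) as [[_ [HR _]]|Hno];
        [|exfalso; apply Hno; split; auto; lia].
      destruct (HR j ltac:(lia) ltac:(lia)) as [HQ|[i' [Hi' HPi']]]; [left; auto|right].
      exists i'; split; auto; lia.
    + destruct (H2 (tau M k - tau M (k-1)) ltac:(lia)) as [[_ [HR _]]|Hno];
        [|exfalso; apply Hno; split; auto; lia].
      destruct (HR j ltac:(lia) ltac:(lia)) as [HQ|[i' [Hi' HPi']]]; [left; auto|right].
      exists i'; split; auto; lia.
Qed.
Theorem theorem2 (A : Type) (psi phi : formula A) (m n : nat) :
  0 < m -> m < n - 1 ->
  equiv_strict (Until (mkI m (Some n)) psi phi)
    (And psi (Or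
       (bigOr (map (fun i => Next (closedI i i)
                 (Until (mkI (m - i) (Some (n - i))) psi phi)) (range 1 m)))
       (bigOr (map (fun i => Next (closedI i i)
                 (Until (closedI 0 (n - 1 - i)) psi phi)) (range (m + 1) (n - 1)))))) /\
  equiv_strict (Release (mkI m (Some n)) psi phi)
    (Or psi (And
       (bigAnd (map (fun i => WNext (closedI i i)
                 (Release (mkI (m - i) (Some (n - i))) psi phi)) (range 1 m)))
       (bigAnd (map (fun i => WNext (closedI i i)
                 (Release (closedI 0 (n - 1 - i)) psi phi)) (range (m + 1) (n - 1)))))) /\
  equiv_strict (Since (mkI m (Some n)) psi phi)
    (And psi (Or
       (bigOr (map (fun i => Prev (closedI i i)
                 (Since (mkI (m - i) (Some (n - i))) psi phi)) (range 1 m)))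
       (bigOr (map (fun i => Prev (closedI i i)
                 (Since (closedI 0 (n - 1 - i)) psi phi)) (range (m + 1) (n - 1)))))) /\
  equiv_strict (Trigger (mkI m (Some n)) psi phi)
    (Or psi (And
       (bigAnd (map (fun i => WPrev (closedI i i)
                 (Trigger (mkI (m - i) (Some (n - i))) psi phi)) (range 1 m)))
       (bigAnd (map (fun i => WPrev (closedI i i)
                 (Trigger (closedI 0 (n - 1 - i)) psi phi)) (range (m + 1) (n - 1)))))).
Proof.
  intros Hm Hn. split; [apply until_case|split; [apply release_case|split; [apply since_case|apply trigger_case]]]; auto.
Qed.
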